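(* For $n\ge 3$ let $M_n$ be the Cayley graph $\mathrm{Cay}(\mathbb{Z}_{2n},\{\pm1,\pm(n-1),n\})$. Then $Z_+(M_n)=n+2$.
   Context: $\mathrm{Cay}(\mathbb{Z}_{2n},S)$ has vertex set $\mathbb{Z}_{2n}$ with $x\sim y$ iff $x-y\in S$. $Z_+(G)$ is the positive zero forcing number: the minimum size of a set $B$ of initially black vertices such that repeated application of the rule ''let $W_1,\dots,W_k$ be the vertex sets of components of $G$ minus the black vertices; a black vertex $u$ whose only white neighbour in the subgraph induced by $W_i\cup(\text{black vertices})$ is $w$ may turn $w$ black'' eventually makes all vertices black. *)

(* Defs.v *)
From mathcomp Require Import all_boot.
Set Implicit Arguments. Unset Strict Implicit. Unset Printing Implicit Defensive.

(* Cayley graph Cay(Z_m, S) on vertex set 'I_m (the residues 0..m-1):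
   x ~ y iff (x - y) mod m lies in S, where S is given as a set of residues. *)
Definition cayley (m : nat) (S : pred nat) : rel 'I_m :=
  fun x y => ((x + m - y) %% m) \in S.
Arguments cayley : clear implicits.

(* M_n = Cay(Z_{2n}, {±1, ±(n-1), n}); residues of 1, -1, n-1, -(n-1), n mod 2n. *)
Definition Mn_conn (n : nat) : pred nat :=
  fun d => d \in [:: 1; 2 * n - 1; n - 1; n + 1; n].

Definition Mn (n : nat) : rel 'I_(2 * n) := cayley (2 * n) (Mn_conn n).
Arguments Mn : clear implicits.

Section PSDForcing.
Variable V : finType.
Variable e : rel V.

Definition white_conn (S : {set V}) : rel V :=
  connect [rel x y | e x y && (x \notin S) && (y \notin S)].

(* Positive semidefinite color-change rule: black u forces white w if w is the
   only white neighbour of u inside the component W of G - S containing w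
   (i.e. the only white neighbour of u in G[W ∪ S]). *)
Definition psd_force (S : {set V}) (u w : V) : Prop :=
  [/\ u \in S, w \notin S, e u w &
      forall w', w' \notin S -> white_conn S w w' -> e u w' -> w' = w].

Inductive psd_reach (B : {set V}) : {set V} -> Prop :=
| psd_reach_refl : psd_reach B B
| psd_reach_step S u w : psd_reach B S -> psd_force S u w -> psd_reach B (w |: S).

Definition psd_forcing_set (B : {set V}) : Prop := psd_reach B [set: V].

Definition Zplus_eq (k : nat) : Prop :=
  (exists B : {set V}, psd_forcing_set B /\ #|B| = k) /\
  (forall B : {set V}, psd_forcing_set B -> k <= #|B|).
End PSDForcing.
Arguments Zplus_eq {V} e k.
Arguments psd_forcing_set {V} e B.

(* Main.v *)
Require Import Defs.
From mathcomp Require Import all_boot zify.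
From Stdlib Require Import Classical.
Set Implicit Arguments. Unset Strict Implicit. Unset Printing Implicit Defensive.
Definition col (n x : nat) := if x < n then x else x - n.
Definition cadj (n a b : nat) : Prop := a = b \/ a.+1 = b \/ b.+1 = a \/ (a = 0 /\ b.+1 = n) \/ (b = 0 /\ a.+1 = n).

Lemma modn_big m a : m <= a < 2*m -> a %% m = a - m.
Proof. move=> h. have E: a = (a-m) + m by lia. rewrite {1}E modnDr modn_small //; lia. Qed.

Lemma MnE n (x y : 'I_(2*n)) : 3 <= n -> Mn n x y <-> (x <> y :> nat /\ cadj n (col n x) (col n y)).
Proof.
move=> hn; have hx := ltn_ord x; have hy := ltn_ord y.
rewrite /Mn /cayley /Mn_conn unfold_in.
have D: (x + 2*n - y) %% (2*n) = if y <= x then x - y else x + 2*n - y.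
  case: leqP => h; first by rewrite modn_big; lia.
  by rewrite modn_small; lia.
rewrite D !inE /cadj /col; clear D.
case: leqP => h1; case: ltnP=> h2; case: ltnP => h3.
all: split; [case/or4P=> [/eqP E|/eqP E|/eqP E|/orP[/eqP E|/eqP E]]; split; [lia|lia|lia|lia|lia|lia|lia|lia|lia|lia] |
  move=> [E1 [E|[E|[E|[[E E']|[E E']]]]]]; apply/or4P ].
all: try (constructor 1; apply/eqP; lia).
all: try (constructor 2; apply/eqP; lia).
all: try (constructor 3; apply/eqP; lia).
all: try (constructor 4; apply/orP; first [left; apply/eqP; lia | right; apply/eqP; lia]).
Qed.

Arguments MnE {n x y}.

Lemma neq_val m (x y : 'I_m) : x <> y -> (x:nat) <> y.
Proof. by move=> h E; apply: h; apply: val_inj. Qed.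

Lemma col_lt n x : x < 2*n -> col n x < n.
Proof. move=> h; rewrite /col; case: ifPn => h2; lia. Qed.

Lemma cadj_sym n a b : cadj n a b -> cadj n b a.
Proof. rewrite /cadj; lia. Qed.

Lemma Mn_sym n (x y : 'I_(2*n)) : 3 <= n -> Mn n x y = Mn n y x.
Proof.
move=> hn; apply/idP/idP => /(MnE hn) [h1 h2]; apply/(MnE hn);
  split; try lia; exact: cadj_sym.
Qed.

Lemma wc_edge n (S : {set 'I_(2*n)}) (x y : 'I_(2*n)) : x \notin S -> y \notin S -> Mn n x y -> white_conn (Mn n) S x y.
Proof. move=> hx hy e; apply: connect1; by rewrite /= e hx hy. Qed.

Lemma wc_sym n (S : {set 'I_(2*n)}) : 3 <= n -> connect_sym [rel x y : 'I_(2*n) | Mn n x y && (x \notin S) && (y \notin S)].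
Proof.
move=> hn; apply: sym_connect_sym => x y /=; rewrite (Mn_sym _ _ hn).
by case: (x \in S); case: (y \in S); rewrite /= ?andbT ?andbF.
Qed.

Definition twinv n (x : nat) := if x < n then x + n else x - n.
Lemma twin_lt n (x : 'I_(2*n)) : twinv n x < 2*n.
Proof. rewrite /twinv; have := ltn_ord x; case: ifPn => ?; lia. Qed.
Definition twin n (x : 'I_(2*n)) : 'I_(2*n) := Ordinal (twin_lt x).

Lemma col_twin n (x : 'I_(2*n)) : col n (twin x) = col n x.
Proof.
rewrite /col /= /twinv; have := ltn_ord x; case: (ltnP x n) => h /=; case: ifPn => h2; lia.
Qed.

Lemma force_twin n (S : {set 'I_(2*n)}) (u w : 'I_(2*n)) : 3 <= n -> psd_force (Mn n) S u w -> twin w \in S.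
Proof.
move=> hn [uS wS euw hw]; case: (boolP (twin w \in S)) => // tS; exfalso.
have hwt : (w:nat) <> twin w by rewrite /= /twinv; have:= ltn_ord w; case: ifPn => ?; lia.
have ewt : Mn n w (twin w) by apply/(MnE hn); split => //; rewrite col_twin; left.
have eut : Mn n u (twin w).
  apply/(MnE hn); have [h1 h2] := (MnE hn).1 euw; split.
    by move=> E; move: tS; rewrite -(val_inj E) uS.
  by rewrite col_twin.
have E := hw _ tS (wc_edge wS tS ewt) eut.
by apply: hwt; rewrite E.
Qed.

Definition emptyc n (S : {set 'I_(2*n)}) c := forall x : 'I_(2*n), col n x = c -> x \notin S.
Definition fullc n (S : {set 'I_(2*n)}) c := forall x : 'I_(2*n), col n x = c -> x \in S.
Definition Q n (S : {set 'I_(2*n)}) :=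
  (exists c, c < n /\ emptyc S c) \/
  (forall c1 c2, c1 < n -> c2 < n -> fullc S c1 -> fullc S c2 -> c1 = c2).

Definition cidx n d k := if d + k < n then d + k else d + k - n.

Lemma path_lem n (S : {set 'I_(2*n)}) d : 3 <= n -> d < n ->
  (forall c, c < n -> c <> d -> exists x : 'I_(2*n), col n x = c /\ x \notin S) ->
  forall x y : 'I_(2*n), x \notin S -> y \notin S -> col n x <> d -> col n y <> d ->
  white_conn (Mn n) S x y.
Proof.
move=> hn hd hw.
have [w0 [cw0 w0S]] : exists x : 'I_(2*n), col n x = cidx n d 1 /\ x \notin S.
  by apply: hw; rewrite /cidx; case: ifPn => ?; lia.
have P : forall k, 1 <= k -> k < n -> forall z : 'I_(2*n), z \notin S ->
    col n z = cidx n d k -> white_conn (Mn n) S w0 z.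
  elim => [|k IH] // hk1 hkn z zS cz.
  case: (posnP k) => [k0|kpos].
    subst k; case: (eqVneq z w0) => [->|zw]; first exact: connect0.
    apply: wc_edge => //; apply/(MnE hn); split.
      by apply: neq_val => E; rewrite E eqxx in zw.
    by rewrite cw0 cz; left.
  have [y [cy yS]] : exists x : 'I_(2*n), col n x = cidx n d k /\ x \notin S.
    by apply: hw; rewrite /cidx; case: ifPn => ?; lia.
  apply: connect_trans (IH kpos (ltnW hkn) y yS cy) (wc_edge yS zS _).
  apply/(MnE hn); rewrite cy cz /cidx; split.
    move=> E; move: cy cz; rewrite E => ->; rewrite /cidx.
    case: ifPn => h1; case: ifPn => h2; lia.
  rewrite /cadj; case: ifPn => h1; case: ifPn => h2; lia.
have Qz : forall z : 'I_(2*n), z \notin S -> col n z <> d -> white_conn (Mn n) S w0 z.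
  move=> z zS cz; have cl := col_lt (ltn_ord z).
  move: cz cl; set c := col n z => cz cl.
  have [k [k1 k2 k3]] : exists k, [/\ 1 <= k, k < n & c = cidx n d k].
    case: (ltnP d c) => h.
      exists (c - d); rewrite /cidx; case: ifPn => ?; split; lia.
    exists (c + n - d); rewrite /cidx; case: ifPn => ?; split; lia.
  exact: P k1 k2 z zS k3.
move=> x y xS yS cx cy.
apply: connect_trans (_ : white_conn (Mn n) S x w0) (Qz y yS cy).
by rewrite /white_conn (wc_sym _ hn); apply: Qz.
Qed.

Lemma two_nb n c : 3 <= n -> c < n -> exists p m, [/\ p < n, m < n, cadj n c p, cadj n c m &
   [/\ p <> c, m <> c & p <> m]].
Proof.
move=> hn hc; case: (ltnP c.+1 n) => h1; case: (posnP c) => h2;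
  [exists c.+1, n.-1 | exists c.+1, c.-1 | exists 0, n.-1 | exists 0, c.-1];
  rewrite /cadj; split; try split; lia.
Qed.

Lemma third n a b : 3 <= n -> a < n -> b < n -> a <> b ->
  exists c, [/\ c < n, cadj n a c, c <> b & c <> a].
Proof.
move=> hn ha hb hab; have [p [m [hp hm cp cm [p1 m1 pm]]]] := two_nb hn ha.
case: (eqVneq p b) => E; [exists m | exists p]; split => //; [lia | exact/eqP].
Qed.

Lemma notfull n (S : {set 'I_(2*n)}) c : ~ fullc S c -> exists x : 'I_(2*n), col n x = c /\ x \notin S.
Proof.
move=> h; apply: NNPP => h2; apply: h => x cx.
case: (boolP (x \in S)) => // xS; exfalso; apply: h2; by exists x.
Qed.

Lemma stuck n (S : {set 'I_(2*n)}) (u w : 'I_(2*n)) : 3 <= n -> (forall c, c < n -> ~ emptyc S c) ->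
  (forall c1 c2, c1 < n -> c2 < n -> fullc S c1 -> fullc S c2 -> c1 = c2) ->
  ~ psd_force (Mn n) S u w.
Proof.
move=> hn hne hf [uS wS euw hw].
have cwl := col_lt (ltn_ord w); have cul := col_lt (ltn_ord u).
have [hneq hcad] := (MnE hn).1 euw.
have key : forall x, x \notin S -> white_conn (Mn n) S w x -> cadj n (col n u) (col n x) ->
    col n x = col n w.
  move=> x xS wx cx; have ux : Mn n u x.
    apply/(MnE hn); split => //.
    by move=> E; move: xS; rewrite -(val_inj E) uS.
  by rewrite (hw x xS wx ux).
have adjw : forall x, x \notin S -> cadj n (col n w) (col n x) -> col n x <> col n w ->
    white_conn (Mn n) S w x.
  move=> x xS c1 c2; apply: wc_edge => //; apply/(MnE hn); split => // E.
  by apply: c2; rewrite E.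
have fullc_of : forall c, cadj n (col n u) c -> cadj n (col n w) c -> c <> col n w -> fullc S c.
  move=> c h1 h2 h3 x cx; case: (boolP (x \in S)) => // xS; exfalso; apply: (h3).
  rewrite -cx; apply: key => //; last by rewrite cx.
  by apply: adjw => //; rewrite cx.
case: (eqVneq (col n u) (col n w)) => [E|NE].
  have [p [m [hp hm cp cm [p1 m1 pm]]]] := two_nb hn cwl.
  apply: pm; apply: hf => //; apply: fullc_of => //; by rewrite E.
have fu : fullc S (col n u).
  by apply: fullc_of; [left | exact: cadj_sym | exact/eqP].
have [c3 [h3 a3 n3w n3u]] := third hn cul cwl (elimN eqP NE).
have [x [cx xS]] : exists x : 'I_(2*n), col n x = c3 /\ x \notin S.
  by apply: notfull => f3; apply: n3u; apply: hf.
apply: n3w; rewrite -cx; apply: key => //; last by rewrite cx.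
apply: (path_lem (d := col n u)) => //.
- move=> c hc hcu; apply: notfull => fc; apply: hcu; exact: hf.
- by move=> E; rewrite E eqxx in NE.
- by rewrite cx.
Qed.

Lemma Q_step n (S : {set 'I_(2*n)}) (u w : 'I_(2*n)) : 3 <= n -> Q S -> psd_force (Mn n) S u w -> Q (w |: S).
Proof.
move=> hn hQ hfo; have tw := force_twin hn hfo.
case: (classic (exists c, c < n /\ emptyc S c)) => [[c [hc hec]]|noe].
  left; exists c; split => // x cx; rewrite in_setU1 negb_or hec // andbT.
  apply/eqP => E; subst x; move: (hec (twin w)); rewrite col_twin cx tw.
  by move/(_ erefl).
case: hQ => [ex|hfl]; first by exfalso.
exfalso; apply: (stuck hn _ hfl hfo) => c hc hemp; apply: noe; by exists c.
Qed.

Lemma Q_reach n (B S : {set 'I_(2*n)}) : 3 <= n -> psd_reach (Mn n) B S -> Q B -> Q S.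
Proof.
move=> hn r hQ; elim: r => [//|S' u w _ IH hfo]; exact: Q_step hn IH hfo.
Qed.

Lemma notQT n : 3 <= n -> ~ Q [set: 'I_(2*n)].
Proof.
move=> hn [[c [hc he]] | hf].
  have h : c < 2*n by lia.
  have H : col n (Ordinal h) = c by rewrite /col /= hc.
  by have := he _ H; rewrite in_setT.
have := hf 0 1 ltac:(lia) ltac:(lia) (fun x _ => in_setT x) (fun x _ => in_setT x); lia.
Qed.

Definition colo n (x : 'I_(2*n)) : 'I_n := Ordinal (col_lt (ltn_ord x)).

Lemma count_lb n (B : {set 'I_(2*n)}) c1 c2 : c1 < n -> c2 < n -> c1 <> c2 ->
  fullc B c1 -> fullc B c2 -> (forall c, c < n -> exists x : 'I_(2*n), col n x = c /\ x \in B) ->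
  n + 2 <= #|B|.
Proof.
move=> h1 h2 h12 f1 f2 ne.
have l1 : c1 + n < 2*n by lia.
have l2 : c2 + n < 2*n by lia.
set a1 := Ordinal l1; set a2 := Ordinal l2.
have ca1 : col n a1 = c1 by rewrite /col /=; case: ifPn => ?; lia.
have ca2 : col n a2 = c2 by rewrite /col /=; case: ifPn => ?; lia.
have a1B : a1 \in B by apply: f1.
have a2B : a2 \in B by apply: f2.
have a12 : a1 != a2 by apply/eqP => /(congr1 val) /=; lia.
have sub : [set a1; a2] \subset B by apply/subsetP => x; rewrite !inE => /orP[/eqP->|/eqP->].
set B' := B :\: [set a1; a2].
have cB : #|B'| = #|B| - 2 by rewrite cardsD (setIidPr sub) cards2 a12.
have cB2 := subset_leq_card sub; rewrite cards2 a12 /= in cB2.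
have : n <= #|B'|.
  have : [set: 'I_n] \subset @colo n @: B'.
    apply/subsetP => i _; have hi := ltn_ord i.
    have li : (i : nat) < 2*n by lia.
    have ci : col n (Ordinal li) = i by rewrite /col /= hi.
    case: (classic ((i:nat) = c1 \/ (i:nat) = c2)) => hic.
      apply/imsetP; exists (Ordinal li); last by apply: val_inj; rewrite /= ci.
      rewrite !inE; apply/andP; split.
        by apply/orP => -[] /eqP /(congr1 val) /=; lia.
      by case: hic => E; [apply: f1|apply: f2]; rewrite ci.
    have [x [cx xB]] := ne i hi.
    apply/imsetP; exists x; last by apply: val_inj; rewrite /= cx.
    rewrite !inE xB andbT; apply/orP => -[] /eqP E; apply: hic;
      [left|right]; by rewrite -cx E.
  move/subset_leq_card; rewrite cardsT card_ord => h.
  exact: leq_trans h (leq_imset_card _ _).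
lia.
Qed.

Lemma lower n (B : {set 'I_(2*n)}) : 3 <= n -> psd_forcing_set (Mn n) B -> n + 2 <= #|B|.
Proof.
move=> hn hB; rewrite leqNgt; apply/negP => hlt.
apply: (notQT hn); apply: (Q_reach hn hB); apply: NNPP => nQ.
have ne : forall c, c < n -> exists x : 'I_(2*n), col n x = c /\ x \in B.
  move=> c hc; apply: NNPP => h; apply: nQ; left; exists c; split => // x cx.
  by apply/negP => xB; apply: h; exists x.
have [c1 [c2 [hc1 [hc2 [f1 [f2 n12]]]]]] :
    exists c1 c2, c1 < n /\ c2 < n /\ fullc B c1 /\ fullc B c2 /\ c1 <> c2.
  apply: NNPP => h; apply: nQ; right => c1 c2 hc1 hc2 f1 f2; apply: NNPP => n12.
  by apply: h; exists c1, c2.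
have := count_lb hc1 hc2 n12 f1 f2 ne; lia.
Qed.

Lemma card_init m k : k <= m -> #|[set x : 'I_m | x < k]| = k.
Proof.
move=> hk.
have -> : [set x : 'I_m | x < k] = [set widen_ord hk i | i in 'I_k].
  apply/setP => x; rewrite !inE; apply/idP/imsetP.
    by move=> h; exists (Ordinal h) => //; apply: val_inj.
  by case=> i _ ->; rewrite /= ltn_ord.
rewrite card_imset ?card_ord //.
by move=> a b /(congr1 val) /= /val_inj.
Qed.

Lemma upper_reach n : 3 <= n -> forall j, 2 <= j <= n ->
  psd_reach (Mn n) [set x : 'I_(2*n) | x < n + 2] [set x : 'I_(2*n) | x < n + j].
Proof.
move=> hn; elim => [|j IH] hj; first lia.
case: (ltnP j 2) => hj2.
  have -> : j = 1 by lia.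
  exact: psd_reach_refl.
have lw : n + j < 2*n by lia.
have lu : j - 1 < 2*n by lia.
set w := Ordinal lw; set u := Ordinal lu.
have -> : [set x : 'I_(2*n) | x < n + j.+1] = w |: [set x : 'I_(2*n) | x < n + j].
  apply/setP => x; rewrite !inE -val_eqE /=.
  case: (ltnP x (n + j)) => h; rewrite ?orbT ?orbF.
    apply/idP; lia.
  by apply/idP/eqP; lia.
apply: (psd_reach_step (IH ltac:(lia)) (_ : psd_force (Mn n) _ u w)); rewrite /u /w; split.
- rewrite inE /=; lia.
- rewrite inE /= ltnn //.
- apply/(MnE hn); rewrite /cadj /col /=; split; first lia.
  case: ifPn => h1; case: ifPn => h2; lia.
- move=> w' hw' _ /(MnE hn) [h1 h2]; apply: val_inj => /=.
  move: hw' h1 h2; rewrite inE /cadj /col /= -leqNgt => hw' h1.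
  have := ltn_ord w'; case: ifPn => h3; case: ifPn => h4; lia.
Qed.

Theorem mainTheorem18 (n : nat) (hn : 3 <= n) : Zplus_eq (Mn n) (n + 2).
Proof.
split.
  exists [set x : 'I_(2*n) | x < n + 2]; split; last by rewrite card_init; lia.
  rewrite /psd_forcing_set.
  have -> : [set: 'I_(2*n)] = [set x : 'I_(2*n) | x < n + n].
    by apply/setP => x; rewrite !inE addnn -mul2n ltn_ord.
  apply: upper_reach; lia.
move=> B; exact: lower.
Qed.
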